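(* (Explicit Rayleigh's Cutting Law.) Let $\Gamma$ be a metrized graph and let $e_i$ be an edge of $\Gamma$ with end points $p_i,q_i$ and length $L_i$. If $e_i$ is not a bridge of $\Gamma$, then for any $s,t\in\Gamma-e_i$, $$r(s,t)=r_{\Gamma-e_i}(s,t)-\frac{1}{L_i+R_i}\big(j^{\Gamma-e_i}_{p_i}(q_i,s)-j^{\Gamma-e_i}_{p_i}(q_i,t)\big)^2=r_{\Gamma-e_i}(s,t)-\frac{L_i+R_i}{L_i^2}\big(j_{p_i}(q_i,s)-j_{p_i}(q_i,t)\big)^2.$$ In particular $r_{\Gamma-e_i}(s,t)\ge r(s,t)$, and equality holds if and only if $j_{p_i}(q_i,s)=j_{p_i}(q_i,t)$.
   Context: A metrized graph $\Gamma$ is a finite connected graph (multiple edges and self-loops allowed) in which each edge is identified with a closed line segment of positive length. $\Gamma$ is regarded as a resistive electric circuit in which each edge is a resistor whose resistance equals its length. $r(x,y)$ is the effective resistance between $x$ and $y$; $j_z(x,y)$ is the voltage at $x$ when a unit current enters at $y$ and exits at $z$, with reference voltage $0$ at $z$. $\Gamma-e_i$ denotes the metrized graph obtained from $\Gamma$ by deleting the interior of the edge $e_i$; $e_i$ is a bridge if $\Gamma-e_i$ is disconnected. When $e_i$ is not a bridge, $R_i:=r_{\Gamma-e_i}(p_i,q_i)$. Subscripts/superscripts $\Gamma-e_i$ indicate resistance and voltage functions on $\Gamma-e_i$. *)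

(* Defs.v *)
(* finite multigraph models of metrized graphs, electrical
   network quantities defined via the discrete Kirchhoff equations. *)
From HB Require Import structures.
From mathcomp Require Import all_boot all_order all_algebra.
From Stdlib Require Import ClassicalEpsilon.
Set Implicit Arguments. Unset Strict Implicit. Unset Printing Implicit Defensive.
Import Order.TTheory GRing.Theory Num.Theory.
Local Open Scope ring_scope.

Section MetrizedGraph.
Variables (R : realFieldType) (V E : finType).
Variables (pe qe : E -> V) (len : E -> R).

Definition adjS (S : {set E}) : rel V :=
  fun x y => [exists e in S, ((pe e == x) && (qe e == y)) || ((pe e == y) && (qe e == x))].

Definition connectedS (S : {set E}) : Prop := forall x y : V, connect (adjS S) x y.

Definition is_bridge (S : {set E}) (e : E) : Prop := ~ connectedS (S :\ e).

(* net current flowing out of vertex v into the edges of S under potential phi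
   (the current through a resistor of resistance len e is the voltage drop
   divided by len e; self-loops carry no current) *)
Definition outflow (S : {set E}) (phi : V -> R) (v : V) : R :=
  \sum_(e in S) ((pe e == v)%:R * (phi (pe e) - phi (qe e)) / len e
                 + (qe e == v)%:R * (phi (qe e) - phi (pe e)) / len e).

(* phi is the potential when a unit current enters at y and exits at z,
   with reference voltage 0 at z *)
Definition is_voltage (S : {set E}) (z y : V) (phi : V -> R) : Prop :=
  phi z = 0 /\ forall v, outflow S phi v = (v == y)%:R - (v == z)%:R.

(* j_z(x,y) on the graph with edge set S *)
Definition jS (S : {set E}) (z x y : V) : R :=
  epsilon (inhabits (fun _ => 0)) (is_voltage S z y) x.

Definition rS (S : {set E}) (x y : V) : R := jS S y x x.

End MetrizedGraph.

(* Main.v *)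
Require Import Defs.
From HB Require Import structures.
From mathcomp Require Import all_boot all_order all_algebra.
From mathcomp Require Import ring lra.
From Stdlib Require Import ClassicalEpsilon.
Set Implicit Arguments. Unset Strict Implicit. Unset Printing Implicit Defensive.
Import Order.TTheory GRing.Theory Num.Theory.
Local Open Scope ring_scope.

Section Aux.
Variables (R : realFieldType) (V E : finType).
Variables (pe qe : E -> V) (len : E -> R).
Hypothesis len_pos : forall e, 0 < len e.

Definition dd e x : R := (pe e == x)%:R - (qe e == x)%:R.
Definition DD (phi : V -> R) e := phi (pe e) - phi (qe e).
Definition En (S : {set E}) (f g : V -> R) := \sum_(e in S) DD f e * DD g e / len e.

Lemma sum_ind (a : V) (F : V -> R) : \sum_v (a == v)%:R * F v = F a.
Proof.
rewrite (bigD1 a) //= eqxx mul1r big1 ?addr0 // => v /negbTE.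
by rewrite eq_sym => ->; rewrite mul0r.
Qed.

Lemma sum_ind' (a : V) (F : V -> R) : \sum_v F v * (v == a)%:R = F a.
Proof.
rewrite -[RHS](sum_ind a); apply: eq_bigr => v _; by rewrite mulrC eq_sym.
Qed.

Lemma sum_d phi e : \sum_v phi v * dd e v = DD phi e.
Proof.
rewrite /dd /DD; under eq_bigr do rewrite mulrBr.
rewrite sumrB; congr (_ - _); rewrite -[in RHS]sum_ind; apply: eq_bigr => v _; by rewrite mulrC.
Qed.

Lemma outflowE S phi v :
  outflow pe qe len S phi v = \sum_(e in S) dd e v * DD phi e / len e.
Proof. apply: eq_bigr => e _; rewrite /dd /DD; ring. Qed.

Lemma green S f phi : \sum_v f v * outflow pe qe len S phi v = En S f phi.
Proof.
under eq_bigr do rewrite outflowE big_distrr.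
rewrite exchange_big; apply: eq_bigr => e _ /=.
rewrite -(sum_d f) !big_distrl; apply: eq_bigr => v _ /=; ring.
Qed.

Lemma En_sym S f g : En S f g = En S g f.
Proof. by apply: eq_bigr => e _; rewrite (mulrC (DD f e)). Qed.

Lemma En_ge0 S f : 0 <= En S f f.
Proof.
apply: sumr_ge0 => e _; apply: mulr_ge0; first by rewrite -expr2 sqr_ge0.
by rewrite invr_ge0 ltW.
Qed.

Lemma En_split (S : {set E}) e f g : e \in S ->
  En S f g = En (S :\ e) f g + DD f e * DD g e / len e.
Proof. by move=> eS; rewrite /En (big_setD1 e eS) /= addrC. Qed.

Lemma green_vol S z y phi : is_voltage pe qe len S z y phi ->
  forall f, En S f phi = f y - f z.
Proof.
move=> [_ Hphi] f; rewrite -green.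
under eq_bigr do rewrite Hphi mulrBr.
by rewrite sumrB !sum_ind'.
Qed.

Lemma sum_dd e : \sum_v dd e v = 0.
Proof.
transitivity (\sum_v (fun _ => 1) v * dd e v).
  by apply: eq_bigr => v _; rewrite mul1r.
by rewrite sum_d /DD subrr.
Qed.

Lemma outflow_sum S phi : \sum_v outflow pe qe len S phi v = 0.
Proof.
under eq_bigr do rewrite outflowE.
rewrite exchange_big big1 // => e _ /=.
under eq_bigr do rewrite -mulrA.
by rewrite -big_distrl /= sum_dd mul0r.
Qed.

Lemma harmonic_const S (conn : connectedS pe qe S) phi :
  (forall v, outflow pe qe len S phi v = 0) -> forall x y, phi x = phi y.
Proof.
move=> H0.
have E0 : En S phi phi = 0.
  by rewrite -green; apply: big1 => v _; rewrite H0 mulr0.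
have HD : forall e, e \in S -> DD phi e = 0.
  move=> e eS.
  have := psumr_eq0P _ E0 eS.
  have /[swap] /[apply] : forall i, i \in S -> 0 <= DD phi i * DD phi i / len i.
    move=> i _; apply: mulr_ge0; first by rewrite -expr2 sqr_ge0.
    by rewrite invr_ge0 ltW.
  move/eqP; rewrite mulf_eq0 invr_eq0 (gt_eqF (len_pos e)) orbF mulf_eq0 orbb.
  by move/eqP.
have step : forall x y, adjS pe qe S x y -> phi x = phi y.
  move=> x y /existsP [e /andP [eS /orP [/andP [/eqP Hp /eqP Hq]|/andP [/eqP Hp /eqP Hq]]]].
    by apply/eqP; rewrite -subr_eq0; have := HD e eS; rewrite /DD Hp Hq => ->.
  by apply/eqP; rewrite eq_sym -subr_eq0; have := HD e eS; rewrite /DD Hp Hq => ->.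
move=> x y; move: (conn x y) => /connectP [p pth ->].
elim: p x pth => [|w p IH] x //= /andP [Hxw Hp].
by rewrite (step _ _ Hxw); apply: IH.
Qed.

Definition Lc (S : {set E}) (u v : V) : R := \sum_(e in S) dd e u * dd e v / len e.

Lemma outflow_lin S phi v : outflow pe qe len S phi v = \sum_u phi u * Lc S u v.
Proof.
rewrite outflowE /Lc; under [RHS]eq_bigr do rewrite big_distrr.
rewrite [RHS]exchange_big /=; apply: eq_bigr => e _.
rewrite -(sum_d phi) big_distrr big_distrl /=; apply: eq_bigr => u _; ring.
Qed.

Lemma exists_voltage S (conn : connectedS pe qe S) z y :
  exists phi, is_voltage pe qe len S z y phi.
Proof.
pose M u v : R := if v == z then (u == z)%:R else Lc S u v.
pose T (phi : V -> R) v := \sum_u phi u * M u v.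
have Tz phi : T phi z = phi z by rewrite /T /M eqxx sum_ind'.
have Tv phi v : v != z -> T phi v = outflow pe qe len S phi v.
  by move/negbTE => Hv; rewrite /T /M Hv outflow_lin.
pose A : 'M[R]_#|V| := \matrix_(i, j) M (enum_val i) (enum_val j).
have TA (w : 'rV[R]_#|V|) j : (w *m A) 0 j = T (fun v => w 0 (enum_rank v)) (enum_val j).
  rewrite mxE /T [RHS](big_enum_val (A := predT)) /=.
  apply: eq_bigr => i _; by rewrite enum_valK mxE.
have key phi : (forall v, v != z -> outflow pe qe len S phi v = 0) -> phi z = 0 -> forall v, phi v = 0.
  move=> H0 Hz.
  have Hall : forall v, outflow pe qe len S phi v = 0.
    move=> v; case: (eqVneq v z) => [->|]; last exact: H0.
    have := outflow_sum S phi; rewrite (bigD1 z) //=.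
    rewrite big1 ?addr0 //.
  by move=> v; rewrite (harmonic_const conn Hall v z).
have Aunit : A \in unitmx.
  rewrite -row_free_unit -kermx_eq0; apply/eqP/row_matrixP => i.
  rewrite row0; set w := row i (kermx A).
  have /sub_kermxP wA : (w <= kermx A)%MS by apply: row_sub.
  have H := key (fun v => w 0 (enum_rank v)).
  apply/rowP => j; rewrite [RHS]mxE -[j]enum_valK; apply: H.
  - move=> v vz; rewrite -Tv // -(enum_rankK v) -TA wA mxE //.
  - rewrite -(Tz (fun v => w 0 (enum_rank v))) -(enum_rankK z) -TA wA mxE //.
pose rhs : 'rV[R]_#|V| := \row_j (if enum_val j == z then 0 else (enum_val j == y)%:R - (enum_val j == z)%:R).
pose w := rhs *m invmx A.
have wA : w *m A = rhs by rewrite /w mulmxKV.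
exists (fun v => w 0 (enum_rank v)).
have Tphi v : T (fun v => w 0 (enum_rank v)) v = if v == z then 0 else (v == y)%:R - (v == z)%:R.
  by rewrite -(enum_rankK v) -TA wA mxE !enum_rankK.
have Hz : w 0 (enum_rank z) = 0 by rewrite -[LHS]/((fun v => w 0 (enum_rank v)) z) -Tz Tphi eqxx.
split => // v.
set phi := (fun v => w 0 (enum_rank v)).
have Ho : forall u, u != z -> outflow pe qe len S phi u = (u == y)%:R - (u == z)%:R.
  by move=> u uz; rewrite -Tv // Tphi (negbTE uz).
case: (eqVneq v z) => [->|]; last first.
  by move=> vz; rewrite Ho // (negbTE vz).
have H1 := outflow_sum S phi; rewrite (bigD1 z) //= in H1.
have H2 : \sum_u ((u == y)%:R - (u == z)%:R : R) = 0.
  have S1 (a : V) : \sum_u ((u == a)%:R : R) = 1.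
    transitivity (\sum_u (fun _ => (1:R)) u * (u == a)%:R); last exact: sum_ind'.
    by apply: eq_bigr => u _; rewrite mul1r.
  by rewrite sumrB !S1 subrr.
rewrite (bigD1 z) //= in H2.
rewrite (eq_bigr _ (fun u uz => Ho u uz)) in H1.
move/eqP: H1; rewrite addr_eq0 => /eqP ->.
by move/eqP: H2; rewrite addr_eq0 eqxx => /eqP ->.
Qed.

Lemma recip S z y1 y2 phi1 phi2 : is_voltage pe qe len S z y1 phi1 ->
  is_voltage pe qe len S z y2 phi2 -> phi1 y2 = phi2 y1.
Proof.
move=> V1 V2; have := green_vol V2 phi1; have := green_vol V1 phi2.
case: V1 => [h1 _]; case: V2 => [h2 _].
by rewrite En_sym h1 h2 !subr0 => -> .
Qed.

End Aux.

Theorem theorem3p1 (R : realFieldType) (V E : finType)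
    (pe qe : E -> V) (len : E -> R)
    (len_pos : forall e, 0 < len e)
    (Gconn : connectedS pe qe [set: E])
    (ei : E) (nobridge : ~ is_bridge pe qe [set: E] ei)
    (s t : V) :
  let G := [set: E] in
  let G' := [set: E] :\ ei in
  let r := rS pe qe len G in
  let r' := rS pe qe len G' in
  let j := jS pe qe len G in
  let j' := jS pe qe len G' in
  let Li := len ei in
  let Ri := r' (pe ei) (qe ei) in
  [/\ r s t = r' s t - 1 / (Li + Ri) * (j' (pe ei) (qe ei) s - j' (pe ei) (qe ei) t) ^+ 2,
      r s t = r' s t - (Li + Ri) / Li ^+ 2 * (j (pe ei) (qe ei) s - j (pe ei) (qe ei) t) ^+ 2,
      r s t <= r' s t
    & (r' s t = r s t <-> j (pe ei) (qe ei) s = j (pe ei) (qe ei) t)].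
Proof.
move=> G G' r r' j j' Li Ri.
have eiG : ei \in G by rewrite in_setT.
have conn' : connectedS pe qe G'.
  move=> x y; case H: (connect (adjS pe qe G') x y) => //; exfalso.
  by apply: nobridge => C; have := C x y; rewrite H.
have vol S (c : connectedS pe qe S) z y : is_voltage pe qe len S z y (fun x => jS pe qe len S z x y).
  exact: (epsilon_spec (inhabits (fun _ => 0)) (is_voltage pe qe len S z y) (exists_voltage len_pos c z y)).
set p := pe ei; set q := qe ei.
have Rec S (cS : connectedS pe qe S) z y1 y2 : jS pe qe len S z y1 y2 = jS pe qe len S z y2 y1.
  exact: (recip (vol S cS z y2) (vol S cS z y1)).
have -> : j' p q s = j' p s q by apply: Rec.
have -> : j' p q t = j' p t q by apply: Rec.
have -> : j p q s = j p s q by apply: Rec.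
have -> : j p q t = j p t q by apply: Rec.
rewrite /Ri /Li /r /r' /rS /j /j'.
pose a x := jS pe qe len G' p x q; pose b x := jS pe qe len G p x q.
pose u x := jS pe qe len G t x s; pose u' x := jS pe qe len G' t x s.
pose c x := jS pe qe len G' q x p.
rewrite -[jS _ _ _ G' p s q]/(a s) -[jS _ _ _ G' p t q]/(a t).
rewrite -[jS _ _ _ G p s q]/(b s) -[jS _ _ _ G p t q]/(b t).
rewrite -[jS _ _ _ G t s s]/(u s) -[jS _ _ _ G' t s s]/(u' s) -[jS _ _ _ G' q p p]/(c p).
have Va : is_voltage pe qe len G' p q a by apply: vol.
have Vb : is_voltage pe qe len G p q b by apply: vol.
have Vu : is_voltage pe qe len G t s u by apply: vol.
have Vu' : is_voltage pe qe len G' t s u' by apply: vol.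
have Vc : is_voltage pe qe len G' q p c by apply: vol.
have gA := green_vol Va; have gB := green_vol Vb; have gU := green_vol Vu.
have gU' := green_vol Vu'; have gC := green_vol Vc.
move: Va Vb Vu Vu' Vc => [a0 _] [b0 _] [u0 _] [u'0 _] [c0 _].
have spl f g : En pe qe len G f g = En pe qe len G' f g + DD pe qe f ei * DD pe qe g ei / len ei.
  exact: En_split.
have E1 : c p = a q.
  have := gC a; rewrite En_sym gA a0 c0 => /eqP; rewrite !sub0r eqr_opp => /eqP //.
have E3 : u' s = u s + DD pe qe u' ei * DD pe qe u ei / len ei.
  have := gU u'; rewrite spl En_sym gU' u0 u'0 !subr0 => <-; by rewrite addrC.
have E4 : DD pe qe u' ei = - (a s - a t).
  have := gA u'; rewrite En_sym gU' /DD -/p -/q => ->; by rewrite opprB.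
have E5 : DD pe qe u ei = - (b s - b t).
  have := gB u; rewrite En_sym gU /DD -/p -/q => ->; by rewrite opprB.
have E6 : b s - b t = (a s - a t) - DD pe qe a ei * DD pe qe u ei / len ei.
  have h2 := spl a u; rewrite gU En_sym gA in h2.
  have h3 : u q - u p = b s - b t.
    by rewrite -opprB; move: E5; rewrite /DD -/p -/q => ->; rewrite opprK.
  rewrite h2 -h3; ring.
have E7 : DD pe qe a ei = - c p by rewrite /DD -/p -/q a0 E1 sub0r.
have Rge0 : 0 <= c p.
  by rewrite E1; have := @En_ge0 _ _ _ pe qe len len_pos G' a; rewrite gA a0 subr0.
have L0 := len_pos ei.
set L := len ei in E3 E6 L0 *; set X := a s - a t in E4 E6 *; set Y := b s - b t in E5 E6 *.
set Rv := c p in E7 Rge0 *; set r0 := u s in E3 *; set r1 := u' s in E3 *.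
rewrite E4 E5 in E3; rewrite E7 E5 in E6.
have LR : 0 < L + Rv by lra.
have HL : L != 0 by rewrite lt0r_neq0.
have HLR : L + Rv != 0 by rewrite lt0r_neq0.
have HY : Y = L * X / (L + Rv).
  have h : Y * L = X * L - Rv * Y.
    by rewrite {1}E6; field.
  apply: (mulIf HLR); rewrite mulfVK //.
  by rewrite mulrDr h; ring.
have G1 : r0 = r1 - 1 / (L + Rv) * X ^+ 2.
  by rewrite E3 HY; field; rewrite HL HLR.
have Hpos : 0 <= 1 / (L + Rv) * X ^+ 2.
  by apply: mulr_ge0; [rewrite divr_ge0 // ltW | exact: sqr_ge0].
split => //.
- by rewrite G1 HY; field; rewrite HL HLR.
- by rewrite G1 lerBlDr lerDl.
- rewrite -/Y; split.
  + move=> h; apply/eqP; rewrite -subr_eq0 -/Y HY.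
    have k0 : 1 / (L + Rv) * X ^+ 2 = 0 by move: G1; rewrite -h; lra.
    move/eqP: k0; rewrite mulf_eq0.
    rewrite div1r invr_eq0 (negbTE HLR) /= sqrf_eq0 => /eqP ->.
    by rewrite mulr0 mul0r.
  + move=> h; have Y0 : Y = 0 by rewrite /Y h subrr.
    have X0 : X = 0.
      by move: Y0; rewrite HY => /eqP; rewrite mulf_eq0 invr_eq0 (negbTE HLR) orbF mulf_eq0 (negbTE HL) /= => /eqP.
    by rewrite G1 X0 expr0n /= mulr0 subr0.
Qed.
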